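(* Consider a credit-attribution game with authors $N=\{1,\dots,n\}$ and papers $P_1,\dots,P_m$, and let $p=(p_1,\dots,p_n)\in[0,1]^n$. For every author $x$, the Shapley values of $x$ in the reliability extensions (with parameters $p$) of the full credit game $\Gamma_{FC}$ and of the full obligation game $\Gamma_{FO}$ are \[ Sh[\overline{v_{FC}}](x)=p_{x}\sum_{k\in Pap_{x}} w_{k}\Big[\sum_{S\subseteq Auth_{k}\setminus \{x\}}\frac{ \Pi_{\emptyset,S} }{(n_{k}-|S|)\binom{n_k}{|S|}} \Big], \qquad Sh[\overline{v_{FO}}](x)= \sum_{k\in Pap_{x}} \frac{w_{k}}{n_{k}}\, \Pi_{Auth_{k},Auth_{k}}, \] where $n_k=|Auth_k|$.
   Context: A credit-attribution game consists of a set of authors $N=\{1,\dots,n\}$ and papers $P_1,\dots,P_m$; each paper $P_k$ has a nonempty author set $Auth_k\subseteq N$ and a weight $w_k\in\mathbb{R}_+$. $Pap_x$ is the set of (indices of) papers having $x$ as an author. The full credit game has $v_{FC}(S)=\sum$ of $w_k$ over papers $k$ with $Auth_k\cap S\ne\emptyset$; the full obligation game has $v_{FO}(S)=\sum$ of $w_k$ over papers $k$ with $Auth_k\subseteq S$. For $T\subseteq S\subseteq N$, $\Pi_{T,S}=\prod_{i\in T}p_i\prod_{i\in S\setminus T}(1-p_i)$ (empty products equal $1$). The reliability extension of $(N,v)$ with parameters $p$ is $(N,\overline v)$ with $\overline v(S)=\sum_{T\subseteq S}v(T)\Pi_{T,S}$. The Shapley value is $Sh[v](x)=\frac1{n!}\sum_{\pi}[v(S^x_\pi\cup\{x\})-v(S^x_\pi)]$,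 the sum over all permutations $\pi$ of $N$, with $S^x_\pi$ the set of players preceding $x$ in $\pi$. *)

(* Defs.v *)
From HB Require Import structures.
From mathcomp Require Import all_boot all_order all_algebra all_fingroup.
Set Implicit Arguments. Unset Strict Implicit. Unset Printing Implicit Defensive.
Import Order.TTheory GRing.Theory Num.Theory.
Local Open Scope ring_scope.

Section Defs.
Variables (R : realFieldType) (n m : nat).

Definition PiTS (p : 'I_n -> R) (T S : {set 'I_n}) : R :=
  (\prod_(i in T) p i) * \prod_(i in S :\: T) (1 - p i).

Definition rel_ext (p : 'I_n -> R) (v : {set 'I_n} -> R) (S : {set 'I_n}) : R :=
  \sum_(T : {set 'I_n} | T \subset S) v T * PiTS p T S.

(* players preceding x in the ordering pi (pi maps a player to its position) *)
Definition preceding (pi : {perm 'I_n}) (x : 'I_n) : {set 'I_n} :=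
  [set y | (pi y < pi x)%N].

Definition shapley (v : {set 'I_n} -> R) (x : 'I_n) : R :=
  (n`!)%:R^-1 *
  \sum_(pi : {perm 'I_n}) (v (preceding pi x :|: [set x]) - v (preceding pi x)).

Definition v_FC (Auth : 'I_m -> {set 'I_n}) (w : 'I_m -> R) (S : {set 'I_n}) : R :=
  \sum_(k | Auth k :&: S != set0) w k.
Definition v_FO (Auth : 'I_m -> {set 'I_n}) (w : 'I_m -> R) (S : {set 'I_n}) : R :=
  \sum_(k | Auth k \subset S) w k.

Definition Pap (Auth : 'I_m -> {set 'I_n}) (x : 'I_n) : {set 'I_m} :=
  [set k | x \in Auth k].

End Defs.

(* Main.v *)
Require Import Defs.
From HB Require Import structures.
From mathcomp Require Import all_boot all_order all_algebra all_fingroup.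
From mathcomp Require Import zify ring.
Set Implicit Arguments. Unset Strict Implicit. Unset Printing Implicit Defensive.
Import Order.TTheory GRing.Theory Num.Theory.
Local Open Scope ring_scope.

Lemma L0 (R : comNzRingType) n (S : {set 'I_n}) (f g : 'I_n -> R) :
  \sum_(T : {set 'I_n} | T \subset S) (\prod_(i in T) f i * \prod_(i in S :\: T) g i)
  = \prod_(i in S) (f i + g i).
Proof.
have -> : \prod_(i in S)(f i + g i) =
   \prod_i ((if i \in S then f i else 0) + (if i \in S then g i else 1)).
  by rewrite big_mkcond; apply eq_bigr => i _; case: (i \in S); rewrite ?add0r.
rewrite bigA_distr.
rewrite [RHS](bigID (fun T : {set 'I_n} => T \subset S)) /= [X in _ = _ + X]big1 ?addr0.
  apply eq_bigr => T sTS.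
  rewrite [RHS](bigID (mem T)) /=; congr (_ * _).
    by apply eq_bigr => i iT; rewrite iT (subsetP sTS i iT).
  rewrite [LHS]big_mkcond [RHS]big_mkcond /=; apply eq_bigr => i _.
  by rewrite inE; case: (i \in T); case: (i \in S).
move=> T nsub; have [i iT niS] := subsetPn nsub.
by rewrite (bigD1 i) //= iT (negbTE niS) mul0r.
Qed.

Section Rel.
Variables (R : realFieldType) (n : nat) (p : 'I_n -> R).

Lemma sumPi1 (S : {set 'I_n}) :
  \sum_(T : {set 'I_n} | T \subset S) PiTS p T S = 1.
Proof.
rewrite /PiTS L0; apply: big1 => i _; by rewrite addrC subrK.
Qed.

Lemma sumU (A S : {set 'I_n}) :
  \sum_(T : {set 'I_n} | T \subset S) (A \subset T)%:R * PiTS p T S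
  = (A \subset S)%:R * PiTS p A A.
Proof.
case: (boolP (A \subset S)) => sAS; last first.
  rewrite mul0r; apply: big1 => T sTS.
  case: (boolP (A \subset T)) => sAT; last by rewrite mul0r.
  by rewrite (subset_trans sAT sTS) in sAS.
rewrite mul1r.
transitivity (\prod_(i in S) (p i + (if i \in A then 0 else 1 - p i))).
  rewrite -L0; apply: eq_bigr => T sTS; rewrite /PiTS.
  case: (boolP (A \subset T)) => sAT.
    rewrite mul1r; congr (_ * _); apply: eq_bigr => i /setDP[_ niT].
    by case: ifP => // iA; rewrite (subsetP sAT i iA) in niT.
  have [i iA niT] := subsetPn sAT.
  rewrite mul0r [X in _ * X](bigD1 i) /=; last by rewrite inE niT (subsetP sAS).
  by rewrite iA mul0r mulr0.
rewrite /PiTS setDv big_set0 mulr1.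
rewrite (bigID (mem A)) /= [X in _ * X]big1 ?mulr1; last first.
  by move=> i /andP[_ /negbTE ->]; rewrite addrC subrK.
apply: eq_big => [i|i /andP[_ ->]]; last by rewrite addr0.
by rewrite /= andbC; case: (boolP (i \in A)) => //= iA; rewrite (subsetP sAS).
Qed.

Lemma sumV (A S : {set 'I_n}) :
  \sum_(T : {set 'I_n} | T \subset S) (A :&: T == set0)%:R * PiTS p T S
  = \prod_(i in S :&: A) (1 - p i).
Proof.
transitivity (\prod_(i in S) ((if i \in A then 0 else p i) + (1 - p i))).
  rewrite -L0; apply: eq_bigr => T sTS; rewrite /PiTS.
  case: (boolP (A :&: T == set0)) => hAT.
    rewrite mul1r; congr (_ * _); apply: eq_bigr => i iT.
    case: ifP => // iA.
    by move/eqP/setP: hAT => /(_ i); rewrite !inE iA iT.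
  have [i] := set0Pn _ hAT; rewrite inE => /andP[iA iT].
  by rewrite mul0r (bigD1 i) //= iA mul0r mul0r.
rewrite [RHS]big_mkcond [LHS]big_mkcond; apply: eq_bigr => i _.
rewrite inE; case: (i \in S) => //=; case: (i \in A) => //=.
  by rewrite add0r.
by rewrite addrC subrK.
Qed.

Lemma sumV' (A S : {set 'I_n}) :
  \sum_(T : {set 'I_n} | T \subset S) (A :&: T != set0)%:R * PiTS p T S
  = 1 - \prod_(i in S :&: A) (1 - p i).
Proof.
rewrite -sumV -[X in X - _](sumPi1 S) -sumrB; apply: eq_bigr => T _.
by case: (A :&: T == set0); rewrite /= ?mul0r ?mul1r ?subr0 ?subrr.
Qed.

End Rel.

Section Comb.
Local Open Scope nat_scope.
Variables (n : nat) (x : 'I_n) (A : {set 'I_n}).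
Hypothesis xA : x \in A.

Definition cnt (S : {set 'I_n}) :=
  #|[set pi : {perm 'I_n} | preceding pi x :&: A == S]|.

Lemma pre_mul (s pi : {perm 'I_n}) y :
  preceding (s * pi)%g y = s @^-1: preceding pi (s y).
Proof. by apply/setP => z; rewrite !inE !permM. Qed.

Lemma pre_mulA (s pi : {perm 'I_n}) y :
  (forall z, (s z \in A) = (z \in A)) ->
  preceding (s * pi)%g y :&: A = s @^-1: (preceding pi (s y) :&: A).
Proof.
move=> hs; rewrite pre_mul preimsetI; congr (_ :&: _).
by apply/setP => z; rewrite inE hs.
Qed.

Lemma card_mulpre (s : {perm 'I_n}) (Q : pred {perm 'I_n}) :
  #|[set pi | Q (s * pi)%g]| = #|[set pi | Q pi]|.
Proof.
have -> : [set pi | Q (s * pi)%g] = (mulg s) @^-1: [set pi | Q pi].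
  by apply/setP => pi; rewrite !inE.
by apply: card_preimset; exact: mulgI.
Qed.

Lemma tpre (y z : 'I_n) (X : {set 'I_n}) : tperm y z @^-1: X = tperm y z @: X.
Proof.
apply/setP => w; rewrite inE -{2}(tpermK y z w) mem_imset //; exact: perm_inj.
Qed.

Lemma timsetK (y z : 'I_n) (X : {set 'I_n}) : tperm y z @: (tperm y z @: X) = X.
Proof. by rewrite -!tpre; apply/setP => w; rewrite !inE tpermK. Qed.

Lemma tA (y z : 'I_n) : y \in A -> z \in A ->
  forall w, (tperm y z w \in A) = (w \in A).
Proof. by move=> yA zA w; case: tpermP => [->|->|] //; rewrite ?yA ?zA. Qed.

Lemma cnt_inv (y z : 'I_n) (S : {set 'I_n}) : y \in A -> z \in A ->
  y != x -> z != x -> cnt (tperm y z @: S) = cnt S.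
Proof.
move=> yA zA yx zx; rewrite /cnt.
rewrite -(card_mulpre (tperm y z) (fun pi => preceding pi x :&: A == S)).
apply: eq_card => pi; rewrite !inE pre_mulA; last exact: tA.
rewrite tpermD // tpre; apply/eqP/eqP => [->|<-]; by rewrite timsetK.
Qed.

Lemma cnt_eq_k k (S S' : {set 'I_n}) : #|S :\: S'| = k ->
  S \subset A :\ x -> S' \subset A :\ x -> #|S| = #|S'| -> cnt S = cnt S'.
Proof.
elim: k S => [|k IH] S hk sS sS' hc.
  have : S == S' by rewrite eqEcard -setD_eq0 -cards_eq0 hk hc leqnn.
  by move/eqP ->.
have : 0 < #|S :\: S'| by rewrite hk.
rewrite card_gt0 => /set0Pn [y]; rewrite inE => /andP[yS' yS].
have : 0 < #|S' :\: S|.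
  have h1 := cardsID S S'; have h2 := cardsID S' S.
  rewrite setIC in h2.
  have -> : #|S' :\: S| = #|S :\: S'|.
    by apply/eqP; rewrite -(eqn_add2l #|S' :&: S|) h1 h2 hc.
  by rewrite hk.
rewrite card_gt0 => /set0Pn [z]; rewrite inE => /andP[zS zS'].
have yB := subsetP sS y yS; have zB := subsetP sS' z zS'.
move: (yB) (zB); rewrite !inE => /andP[yx yA] /andP[zx zA].
rewrite -(cnt_inv S yA zA yx zx); apply: IH.
- have -> : tperm y z @: S :\: S' = (S :\: S') :\ y.
    apply/setP => w; rewrite -tpre !inE.
    case: tpermP => [->|->|/eqP wy /eqP wz].
    + by rewrite eqxx (negbTE zS) andbF.
    + by rewrite zS' /= andbF.
    + by rewrite wy.
  move: hk; rewrite (cardsD1 y) inE yS yS' /=.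
  by rewrite add1n => -[].
- apply/subsetP => w; rewrite -tpre inE.
  by case: tpermP => [->|->|_ _ /(subsetP sS)] // _.
- by [].
- by rewrite card_imset //; exact: perm_inj.
Qed.

Lemma cnt_eq (S S' : {set 'I_n}) :
  S \subset A :\ x -> S' \subset A :\ x -> #|S| = #|S'| -> cnt S = cnt S'.
Proof. exact: cnt_eq_k. Qed.


Definition Ncnt y s := #|[set pi : {perm 'I_n} | #|preceding pi y :&: A| == s]|.

Lemma N_eq y s : y \in A -> Ncnt y s = Ncnt x s.
Proof.
move=> yA; rewrite /Ncnt.
rewrite -(card_mulpre (tperm x y) (fun pi => #|preceding pi x :&: A| == s)).
apply: eq_card => pi; rewrite !inE pre_mulA; last exact: tA.
by rewrite tpermL card_preimset //; exact: perm_inj.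
Qed.

Lemma rank_inj (pi : {perm 'I_n}) y z : y \in A -> z \in A ->
  #|preceding pi y :&: A| = #|preceding pi z :&: A| -> y = z.
Proof.
move=> yA zA hc.
case: (ltngtP (pi y) (pi z)) => h.
- have : preceding pi y :&: A \proper preceding pi z :&: A.
    apply/properP; split.
      apply/subsetP => w; rewrite !inE => /andP[hw ->]; rewrite andbT.
      exact: ltn_trans hw h.
    by exists y; rewrite !inE ?h ?yA // ltnn.
  by move/proper_card; rewrite hc ltnn.
- have : preceding pi z :&: A \proper preceding pi y :&: A.
    apply/properP; split.
      apply/subsetP => w; rewrite !inE => /andP[hw ->]; rewrite andbT.
      exact: ltn_trans hw h.
    by exists z; rewrite !inE ?h ?zA // ltnn.
  by move/proper_card; rewrite hc ltnn.
- by apply: (@perm_inj _ pi); apply: val_inj.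
Qed.

Lemma rank_lt (pi : {perm 'I_n}) y : y \in A -> #|preceding pi y :&: A| < #|A|.
Proof.
move=> yA; apply: proper_card; apply/properP; split; first exact: subsetIr.
by exists y; rewrite // !inE ltnn.
Qed.

Lemma card_set_sum (T : finType) (D : {pred T}) (Q : pred T) :
  #|[set y in D | Q y]| = \sum_(y in D) (Q y : nat).
Proof.
rewrite -sum1_card [RHS]big_mkcond [LHS]big_mkcond /=; apply: eq_bigr => y _.
by rewrite !inE; case: (y \in D); case: (Q y).
Qed.

Lemma card_set_sumT (T : finType) (Q : pred T) :
  #|[set y | Q y]| = \sum_y (Q y : nat).
Proof.
rewrite -sum1_card [LHS]big_mkcond /=; apply: eq_bigr => y _.
by rewrite !inE; case: (Q y).
Qed.

Lemma rank_one (pi : {perm 'I_n}) s : s < #|A| ->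
  #|[set y in A | #|preceding pi y :&: A| == s]| = 1.
Proof.
move=> sa.
pose c (j : 'I_#|A|) := #|[set y in A | #|preceding pi y :&: A| == j]|.
have le1 j : c j <= 1.
  apply/card_le1_eqP => y z; rewrite !inE => /andP[yA /eqP ry] /andP[zA /eqP rz].
  by apply: (@rank_inj pi z y zA yA); rewrite rz ry.
have hsum : \sum_(j < #|A|) c j = #|A|.
  rewrite /c; under eq_bigr => j _ do rewrite card_set_sum.
  rewrite exchange_big /=; transitivity (\sum_(y in A) 1); last exact: sum1_card.
  apply: eq_bigr => y yA.
  rewrite (bigD1 (Ordinal (rank_lt pi yA))) //= eqxx big1 // => j hj.
  apply/eqP; rewrite eqb0; apply/eqP => hj'; move: hj; rewrite -val_eqE /= hj' eqxx //.
pose s0 := Ordinal sa.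
have : #|A| <= c s0 + #|A|.-1.
  rewrite -{1}hsum (bigD1 s0) //= leq_add2l.
  apply: (@leq_trans (\sum_(j < #|A| | j != s0) 1)); first exact: leq_sum.
  by rewrite sum1_card cardC1 card_ord.
move: (le1 s0); rewrite /c /=.
have : 0 < #|A| by apply/card_gt0P; exists x.
move: (#|A|) (#|[set y in A | _]|) => u v; lia.
Qed.

Lemma sumN s : s < #|A| -> \sum_(y in A) Ncnt y s = n`!.
Proof.
move=> sa; rewrite /Ncnt; under eq_bigr => y _ do rewrite (card_set_sum predT).
rewrite exchange_big /= -card_Sn -sum1_card; apply: eq_bigr => pi _.
by rewrite -card_set_sum rank_one.
Qed.

Lemma Nx s : s < #|A| -> #|A| * Ncnt x s = n`!.
Proof.
move=> sa; rewrite -(sumN sa) -sum_nat_const; apply: eq_bigr => y yA.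
by rewrite N_eq.
Qed.

Lemma sum_pred1 (T : finType) (C : pred T) (X : T) :
  \sum_(S | C S) ((X == S) : nat) = C X.
Proof.
case: (boolP (C X)) => hC.
  rewrite (bigD1 X) //= eqxx big1 // => S /andP[_ /negbTE].
  by rewrite eq_sym => ->.
by apply: big1 => S hS; case: eqP => // hX; rewrite hX hS in hC.
Qed.

Lemma pre_sub (pi : {perm 'I_n}) : preceding pi x :&: A \subset A :\ x.
Proof.
apply/subsetP => w; rewrite !inE => /andP[hw ->]; rewrite andbT.
by apply/eqP => hwx; rewrite hwx ltnn in hw.
Qed.

Lemma sum_cnt s :
  \sum_(S : {set 'I_n} | (S \subset A :\ x) && (#|S| == s)) cnt S = Ncnt x s.
Proof.
rewrite /cnt /Ncnt; under eq_bigr => S _ do rewrite (card_set_sum predT).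
rewrite exchange_big (card_set_sum predT); apply: eq_bigr => pi _ /=.
by rewrite sum_pred1 pre_sub.
Qed.

Lemma cnt_val (S : {set 'I_n}) : S \subset A :\ x ->
  (#|A| - #|S|) * 'C(#|A|, #|S|) * cnt S = n`!.
Proof.
move=> sB.
have hB : #|A :\ x| = #|A|.-1 by rewrite (cardsD1 x A) xA.
have sa : #|S| < #|A|.
  have := subset_leq_card sB; rewrite hB.
  have : 0 < #|A| by apply/card_gt0P; exists x.
  move: (#|A|) (#|S|) => u v; lia.
have hs := sum_cnt #|S|.
have E : \sum_(S' : {set 'I_n} | (S' \subset A :\ x) && (#|S'| == #|S|)) cnt S'
   = \sum_(S' in [set S' : {set 'I_n} | S' \subset A :\ x & #|S'| == #|S|]) cnt S.
  apply: eq_big => [S'|S']; first by rewrite inE.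
  by move=> /andP[sB' /eqP hc]; apply: cnt_eq.
rewrite E sum_nat_const cards_draws hB in hs.
rewrite -mul_bin_left -mul_bin_diag -(Nx sa) -hs mulnA //.
Qed.

End Comb.

Section Main.
Variables (R : realFieldType) (n m : nat).
Local Open Scope ring_scope.

Lemma key (x : 'I_n) (A : {set 'I_n}) (xA : x \in A) (F : {set 'I_n} -> R) :
  (n`!)%:R^-1 * \sum_(pi : {perm 'I_n}) F (preceding pi x :&: A) =
  \sum_(S : {set 'I_n} | S \subset A :\ x)
     F S / ((#|A| - #|S|)%:R * 'C(#|A|, #|S|)%:R).
Proof.
have E : \sum_(pi : {perm 'I_n}) F (preceding pi x :&: A) =
  \sum_(S : {set 'I_n} | S \subset A :\ x) F S * (cnt x A S)%:R.
  under [RHS]eq_bigr => S _ do rewrite /cnt card_set_sumT natr_sum mulr_sumr.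
  rewrite exchange_big; apply: eq_bigr => pi _.
  rewrite (bigD1 (preceding pi x :&: A)); last exact: pre_sub.
  rewrite eqxx mulr1n mulr1 big1 => [|S /andP[_ /negbTE]].
    by rewrite /= addr0.
  by rewrite eq_sym => ->; rewrite mulr0.
rewrite E mulr_sumr; apply: eq_bigr => S sB.
have h := cnt_val xA sB.
have hc : (cnt x A S)%:R != 0 :> R.
  rewrite pnatr_eq0; apply/eqP => c0; rewrite c0 muln0 in h.
  by move: (fact_gt0 n); rewrite -h.
have huv : ((#|A| - #|S|)%:R * 'C(#|A|, #|S|)%:R) != 0 :> R.
  rewrite -natrM pnatr_eq0; apply/eqP => c0; rewrite c0 mul0n in h.
  by move: (fact_gt0 n); rewrite -h.
rewrite -h !natrM; field.
by move: huv; rewrite mulf_eq0 negb_or => /andP[-> ->]; rewrite hc.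
Qed.

Variables (Auth : 'I_m -> {set 'I_n}) (w : 'I_m -> R) (p : 'I_n -> R).

Lemma relFO S : rel_ext p (v_FO Auth w) S =
  \sum_k w k * ((Auth k \subset S)%:R * PiTS p (Auth k) (Auth k)).
Proof.
rewrite /rel_ext /v_FO.
under eq_bigr => T _ do rewrite big_distrl /= big_mkcond /=.
rewrite exchange_big; apply: eq_bigr => k _.
rewrite -sumU mulr_sumr; apply: eq_bigr => T _.
by case: (Auth k \subset T); rewrite ?mul1r ?mul0r ?mulr0.
Qed.

Lemma relFC S : rel_ext p (v_FC Auth w) S =
  \sum_k w k * (1 - \prod_(i in S :&: Auth k) (1 - p i)).
Proof.
rewrite /rel_ext /v_FC.
under eq_bigr => T _ do rewrite big_distrl /= big_mkcond /=.
rewrite exchange_big; apply: eq_bigr => k _.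
rewrite -sumV' mulr_sumr; apply: eq_bigr => T _.
by case: (Auth k :&: T != set0); rewrite ?mul1r ?mul0r ?mulr0.
Qed.

Lemma notin_pre (pi : {perm 'I_n}) x : x \notin preceding pi x.
Proof. by rewrite inE ltnn. Qed.

Lemma margFC (pi : {perm 'I_n}) x :
  rel_ext p (v_FC Auth w) (preceding pi x :|: [set x]) -
  rel_ext p (v_FC Auth w) (preceding pi x) =
  p x * \sum_(k in Pap Auth x) w k * PiTS p set0 (preceding pi x :&: Auth k).
Proof.
rewrite !relFC -sumrB mulr_sumr [RHS]big_mkcond; apply: eq_bigr => k _.
rewrite inE setIUl /PiTS big_set0 setD0 mul1r.
case: (boolP (x \in Auth k)) => xA.
  have -> : [set x] :&: Auth k = [set x] by apply/setIidPl; rewrite sub1set.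
  rewrite setUC big_setU1 /=; last by rewrite inE negb_and notin_pre.
  ring.
rewrite (disjoint_setI0 (A := [set x])); last by rewrite disjoints1.
by rewrite setU0 subrr.
Qed.

Lemma margFO (pi : {perm 'I_n}) x :
  rel_ext p (v_FO Auth w) (preceding pi x :|: [set x]) -
  rel_ext p (v_FO Auth w) (preceding pi x) =
  \sum_(k in Pap Auth x) w k * PiTS p (Auth k) (Auth k) *
     (preceding pi x :&: Auth k == Auth k :\ x)%:R.
Proof.
rewrite !relFO -sumrB [RHS]big_mkcond; apply: eq_bigr => k _.
rewrite inE.
case: (boolP (x \in Auth k)) => xA.
  have -> : (Auth k \subset preceding pi x) = false.
    apply/negbTE; apply/negP => /subsetP /(_ x xA); apply/negP; exact: notin_pre.
  have -> : (Auth k \subset preceding pi x :|: [set x]) =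
            (preceding pi x :&: Auth k == Auth k :\ x).
    rewrite eqEsubset pre_sub //= subsetI subDset setUC subsetDl andbT.
    by [].
  rewrite mulr0n mul0r mulr0 subr0; ring.
have -> : (Auth k \subset preceding pi x :|: [set x]) = (Auth k \subset preceding pi x).
  apply/idP/idP => h; last exact: subset_trans h (subsetUl _ _).
  apply/subsetP => y yA; move/subsetP: h => /(_ y yA); rewrite inE => /orP[//|].
  by rewrite inE => /eqP yx; rewrite -yx yA in xA.
by rewrite subrr.
Qed.

End Main.

Theorem theorem2 (R : realFieldType) (n m : nat)
  (Auth : 'I_m -> {set 'I_n}) (w : 'I_m -> R) (p : 'I_n -> R)
  (hAuth : forall k, Auth k != set0)
  (hw : forall k, 0 <= w k)
  (hp : forall i, 0 <= p i <= 1) (x : 'I_n) :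
  shapley (rel_ext p (v_FC Auth w)) x =
    p x * \sum_(k in Pap Auth x)
            w k * \sum_(S : {set 'I_n} | S \subset Auth k :\ x)
                    PiTS p set0 S /
                    ((#|Auth k| - #|S|)%:R * 'C(#|Auth k|, #|S|)%:R)
  /\
  shapley (rel_ext p (v_FO Auth w)) x =
    \sum_(k in Pap Auth x) w k / #|Auth k|%:R * PiTS p (Auth k) (Auth k).
Proof.
split; rewrite /shapley.
  under eq_bigr => pi _ do rewrite margFC.
  rewrite -mulr_sumr exchange_big mulrCA; congr (_ * _).
  rewrite mulr_sumr; apply: eq_bigr => k; rewrite inE => xA.
  by rewrite -mulr_sumr mulrCA (key xA (PiTS p set0)).
under eq_bigr => pi _ do rewrite margFO.
rewrite exchange_big mulr_sumr; apply: eq_bigr => k; rewrite inE => xA.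
rewrite -mulr_sumr mulrCA.
rewrite (key xA (fun S => (S == Auth k :\ x)%:R)).
rewrite (bigD1 (Auth k :\ x)) //= eqxx big1 ?addr0; last first.
  by move=> S /andP[_ /negbTE]; rewrite eq_sym => ->; rewrite mul0r.
have hB : #|Auth k| = (#|Auth k :\ x|).+1 by rewrite (cardsD1 x (Auth k)) xA.
have e2 : 'C((#|Auth k :\ x|).+1, #|Auth k :\ x|) = (#|Auth k :\ x|).+1.
  have h := @bin_sub (#|Auth k :\ x|).+1 1 (ltn0Sn _).
  by rewrite subn1 bin1 /= in h.
rewrite hB subSnn e2 mul1r mul1r; exact: mulrAC.
Qed.
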